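(* Let $(a,b)\subset\mathbb{R}$ be a finite interval, $m,n\in\mathbb{N}$, $\varepsilon_0>0$. For each $\varepsilon\in[0,\varepsilon_0)$ let $A(\cdot;\varepsilon)\in (W^{n-1}_\infty)^{m\times m}$ and let $L(\varepsilon)\colon (W^n_\infty)^m\to(W^{n-1}_\infty)^m$, $L(\varepsilon)y:=y'+A(\cdot;\varepsilon)y$. The following three conditions are equivalent: (I) $A(\cdot;\varepsilon)\to A(\cdot;0)$ in $(W^{n-1}_\infty)^{m\times m}$ as $\varepsilon\to0+$; $(a_1)$ $\|L(\varepsilon)-L(0)\|\to0$ as $\varepsilon\to0+$, where $\|\cdot\|$ is the operator norm from $(W^n_\infty)^m$ to $(W^{n-1}_\infty)^m$; $(a_2)$ $L(\varepsilon)y\to L(0)y$ in $(W^{n-1}_\infty)^m$ as $\varepsilon\to0+$ for every $y\in(W^n_\infty)^m$.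
   Context: For an integer $k\ge0$, $W^k_\infty=W^k_\infty([a,b];\mathbb{C})$ is the Sobolev space of complex functions on $[a,b]$ whose derivatives up to order $k$ are essentially bounded, with norm $\|y\|_{k,\infty}=\sum_{j=0}^k\|y^{(j)}\|_{L_\infty}$; $W^0_\infty=L_\infty$. $(W^k_\infty)^m$, $(W^k_\infty)^{m\times m}$ denote vector/matrix functions with components in $W^k_\infty$, normed componentwise. *)

(* Defs.v *)
From HB Require Import structures.
From mathcomp Require Import all_boot all_order all_algebra.
From mathcomp Require Import all_classical all_reals all_analysis.
From mathcomp Require Import complex ess_sup_inf.
Set Implicit Arguments. Unset Strict Implicit. Unset Printing Implicit Defensive.
Import Order.TTheory GRing.Theory Num.Theory.
Import numFieldNormedType.Exports.
Local Open Scope classical_set_scope.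
Local Open Scope ring_scope.

Section Sobolev.
Variable R : realType.
Local Notation C := (R[i]).

Definition cderiv (f : R -> C) : R -> C :=
  fun x => Complex (derive1 (fun t => complex.Re (f t)) x) (derive1 (fun t => complex.Im (f t)) x).

Definition cderivn (j : nat) (f : R -> C) : R -> C := iter j cderiv f.

Definition cintegral (a x : R) (f : R -> C) : C :=
  Complex (\int[lebesgue_measure]_(t in `[a, x]) complex.Re (f t))
          (\int[lebesgue_measure]_(t in `[a, x]) complex.Im (f t)).

Definition Linf_norm (a b : R) (g : R -> C) : \bar R :=
  ess_sup lebesgue_measure
    (fun x => if x \in `[a, b] then (ComplexField.Normc.normc (g x))%:E else 0%E).

Definition measurable_on (a b : R) (g : R -> C) : Prop :=
  measurable_fun `[a, b] (fun x => complex.Re (g x)) /\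
  measurable_fun `[a, b] (fun x => complex.Im (g x)).

(* f belongs to W^k_oo([a,b]; C): the derivatives f, f', ..., f^(k-1) are
   absolutely continuous on [a,b] (each is the indefinite integral of the next
   one), and f, f', ..., f^(k) are measurable and essentially bounded. *)
Definition isW (a b : R) (k : nat) (f : R -> C) : Prop :=
  (forall j, (j <= k)%N ->
     measurable_on a b (cderivn j f) /\ (Linf_norm a b (cderivn j f) < +oo)%E) /\
  (forall j, (j < k)%N -> exists c : C,
     forall x, a < x < b -> cderivn j f x = c + cintegral a x (cderivn j.+1 f)).

Definition Wnorm (a b : R) (k : nat) (f : R -> C) : \bar R :=
  (\sum_(j < k.+1) Linf_norm a b (cderivn j f))%E.

Definition isWvec (a b : R) (k m : nat) (y : R -> 'cV[C]_m) : Prop :=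
  forall i : 'I_m, isW a b k (fun x => y x i ord0).

Definition Wvec_norm (a b : R) (k m : nat) (y : R -> 'cV[C]_m) : \bar R :=
  (\sum_(i < m) Wnorm a b k (fun x => y x i ord0))%E.

Definition isWmat (a b : R) (k m : nat) (A : R -> 'M[C]_m) : Prop :=
  forall i j : 'I_m, isW a b k (fun x => A x i j).

Definition Wmat_norm (a b : R) (k m : nat) (A : R -> 'M[C]_m) : \bar R :=
  (\sum_(i < m) \sum_(j < m) Wnorm a b k (fun x => A x i j))%E.

Definition vderiv (m : nat) (y : R -> 'cV[C]_m) : R -> 'cV[C]_m :=
  fun x => \col_i cderiv (fun t => y t i ord0) x.

Definition Lop (m : nat) (A : R -> 'M[C]_m) (y : R -> 'cV[C]_m) : R -> 'cV[C]_m :=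
  fun x => vderiv y x + A x *m y x.

Definition op_norm_diff (a b : R) (n m : nat)
    (L1 L2 : (R -> 'cV[C]_m) -> (R -> 'cV[C]_m)) : \bar R :=
  ereal_sup [set Wvec_norm a b n.-1 (fun x => L1 y x - L2 y x) |
              y in [set y | isWvec a b n y /\ (Wvec_norm a b n y <= 1)%E]].

End Sobolev.

(* Main.v *)
Require Import Defs.
From HB Require Import structures.
From mathcomp Require Import all_boot all_order all_algebra.
From mathcomp Require Import all_classical all_reals all_analysis.
From mathcomp Require Import complex ess_sup_inf.
From mathcomp Require Import ring lra.
From mathcomp Require Import measurable_realfun.
From mathcomp Require Import zify.
Import Order.TTheory GRing.Theory Num.Theory.
Import numFieldNormedType.Exports.
Local Open Scope classical_set_scope.
Local Open Scope ring_scope.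
Section PartA.
Context {R : realType}.
Local Notation C := (R[i]).

Lemma derD' (F G : R -> R) x : derivable F x 1 -> derivable G x 1 ->
  derivable (fun t => F t + G t) x 1 /\ 'D_1 (fun t => F t + G t) x = 'D_1 F x + 'D_1 G x.
Proof. move=> dF dG. split; [exact: derivableD | exact: deriveD]. Qed.
Lemma derB' (F G : R -> R) x : derivable F x 1 -> derivable G x 1 ->
  derivable (fun t => F t - G t) x 1 /\ 'D_1 (fun t => F t - G t) x = 'D_1 F x - 'D_1 G x.
Proof. move=> dF dG. split; [exact: derivableB | exact: deriveB]. Qed.
Lemma derM' (F G : R -> R) x : derivable F x 1 -> derivable G x 1 ->
  derivable (fun t => F t * G t) x 1 /\ 'D_1 (fun t => F t * G t) x = 'D_1 F x * G x + F x * 'D_1 G x.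
Proof. move=> dF dG. split; [exact: derivableM | ]. 
have := deriveM dF dG. rewrite /GRing.scale /= => ->. by rewrite addrC mulrC [_ * G x]mulrC. Qed.

Definition cdiff (f : R -> C) (x : R) :=
  derivable (fun t => complex.Re (f t)) x 1 /\ derivable (fun t => complex.Im (f t)) x 1.

Lemma ReD (x y : C) : complex.Re (x + y) = complex.Re x + complex.Re y.
Proof. by case: x; case: y. Qed.
Lemma ImD (x y : C) : complex.Im (x + y) = complex.Im x + complex.Im y.
Proof. by case: x; case: y. Qed.
Lemma ReB (x y : C) : complex.Re (x - y) = complex.Re x - complex.Re y.
Proof. by case: x; case: y. Qed.
Lemma ImB (x y : C) : complex.Im (x - y) = complex.Im x - complex.Im y.
Proof. by case: x; case: y. Qed.
Lemma ReM (x y : C) : complex.Re (x * y) = complex.Re x * complex.Re y - complex.Im x * complex.Im y.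
Proof. by case: x; case: y. Qed.
Lemma ImM (x y : C) : complex.Im (x * y) = complex.Re x * complex.Im y + complex.Im x * complex.Re y.
Proof. by case: x => ? ?; case: y => ? ? /=; rewrite addrC. Qed.

Lemma cderivE (f : R -> C) x :
  cderiv f x = Complex ('D_1 (fun t => complex.Re (f t)) x) ('D_1 (fun t => complex.Im (f t)) x).
Proof. by rewrite /cderiv !derive1E. Qed.

Lemma cderiv_loc (f g : R -> C) x : (\near x, f x = g x) -> cderiv f x = cderiv g x.
Proof.
move=> fg; rewrite !cderivE; congr Complex; apply: near_eq_derive;
  by apply: filterS fg => y ->.
Qed.

Lemma cdiff_loc (f g : R -> C) x : (\near x, f x = g x) -> cdiff f x -> cdiff g x.
Proof.
move=> fg [h1 h2]; split.
  by apply: (near_eq_derivable _ h1); apply: filterS fg => y ->.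
by apply: (near_eq_derivable _ h2); apply: filterS fg => y ->.
Qed.

Lemma cdiff_cst (c : C) x : cdiff (fun=> c) x.
Proof. by split; exact: derivable_cst. Qed.

Lemma cderiv_cst (c : C) x : cderiv (fun=> c) x = 0.
Proof. by rewrite cderivE !derive_cst. Qed.

Lemma cdiffD (f g : R -> C) x : cdiff f x -> cdiff g x ->
  cdiff (fun t => f t + g t) x /\ cderiv (fun t => f t + g t) x = cderiv f x + cderiv g x.
Proof.
move=> [f1 f2] [g1 g2].
have E1 : (fun t => complex.Re (f t + g t)) = (fun t => complex.Re (f t) + complex.Re (g t)).
  by apply/funext => t; rewrite ReD.
have E2 : (fun t => complex.Im (f t + g t)) = (fun t => complex.Im (f t) + complex.Im (g t)).
  by apply/funext => t; rewrite ImD.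
have [d1 e1] := derD' _ _ _ f1 g1; have [d2 e2] := derD' _ _ _ f2 g2.
rewrite /cdiff !cderivE E1 E2 e1 e2; split => //.
Qed.

Lemma cdiffB (f g : R -> C) x : cdiff f x -> cdiff g x ->
  cdiff (fun t => f t - g t) x /\ cderiv (fun t => f t - g t) x = cderiv f x - cderiv g x.
Proof.
move=> [f1 f2] [g1 g2].
have E1 : (fun t => complex.Re (f t - g t)) = (fun t => complex.Re (f t) - complex.Re (g t)).
  by apply/funext => t; rewrite ReB.
have E2 : (fun t => complex.Im (f t - g t)) = (fun t => complex.Im (f t) - complex.Im (g t)).
  by apply/funext => t; rewrite ImB.
have [d1 e1] := derB' _ _ _ f1 g1; have [d2 e2] := derB' _ _ _ f2 g2.
rewrite /cdiff !cderivE E1 E2 e1 e2; split => //.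
Qed.

Lemma cdiffM (f g : R -> C) x : cdiff f x -> cdiff g x ->
  cdiff (fun t => f t * g t) x /\
  cderiv (fun t => f t * g t) x = cderiv f x * g x + f x * cderiv g x.
Proof.
move=> [f1 f2] [g1 g2].
have E1 : (fun t => complex.Re (f t * g t)) =
  (fun t => complex.Re (f t) * complex.Re (g t) - complex.Im (f t) * complex.Im (g t)).
  by apply/funext => t; rewrite ReM.
have E2 : (fun t => complex.Im (f t * g t)) =
  (fun t => complex.Re (f t) * complex.Im (g t) + complex.Im (f t) * complex.Re (g t)).
  by apply/funext => t; rewrite ImM.
have [d11 e11] := derM' _ _ _ f1 g1; have [d22 e22] := derM' _ _ _ f2 g2.
have [d12 e12] := derM' _ _ _ f1 g2; have [d21 e21] := derM' _ _ _ f2 g1.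
have [d1 e1] := derB' _ _ _ d11 d22; have [d2 e2] := derD' _ _ _ d12 d21.
rewrite /cdiff !cderivE E1 E2 e1 e2 e11 e22 e12 e21; split => //.
case: (f x) => p q; case: (g x) => r s /=.
apply/eqP; rewrite eq_complex /=; apply/andP; split; apply/eqP; ring.
Qed.

End PartA.
Section PartB.
Context {R : realType}.
Local Notation C := (R[i]).

Lemma cdiff_sum (I : Type) (s : seq I) (F : I -> R -> C) x :
  (forall i, cdiff (F i) x) ->
  cdiff (fun t => \sum_(i <- s) F i t) x /\
  cderiv (fun t => \sum_(i <- s) F i t) x = \sum_(i <- s) cderiv (F i) x.
Proof.
move=> dF; elim: s => [|i s [ds es]].
  have -> : (fun t => \sum_(i <- [::]) F i t) = (fun=> 0 : C).
    by apply/funext => t; rewrite big_nil.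
  by rewrite big_nil; split; [exact: cdiff_cst|exact: cderiv_cst].
have -> : (fun t => \sum_(j <- i :: s) F j t) = (fun t => F i t + \sum_(j <- s) F j t).
  by apply/funext => t; rewrite big_cons.
have [d e] := cdiffD _ _ _ (dF i) ds.
by rewrite big_cons -es; split.
Qed.

Lemma cdiff_sum_in (I : eqType) (s : seq I) (F : I -> R -> C) x :
  (forall i, i \in s -> cdiff (F i) x) ->
  cdiff (fun t => \sum_(i <- s) F i t) x /\
  cderiv (fun t => \sum_(i <- s) F i t) x = \sum_(i <- s) cderiv (F i) x.
Proof.
move=> dF; elim: s dF => [|i s IH] dF.
  have -> : (fun t => \sum_(i <- [::]) F i t) = (fun=> 0 : C).
    by apply/funext => t; rewrite big_nil.
  by rewrite big_nil; split; [exact: cdiff_cst|exact: cderiv_cst].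
have [ds es] : cdiff (fun t => \sum_(i <- s) F i t) x /\
  cderiv (fun t => \sum_(i <- s) F i t) x = \sum_(i <- s) cderiv (F i) x.
  by apply: IH => j js; apply: dF; rewrite in_cons js orbT.
have -> : (fun t => \sum_(j <- i :: s) F j t) = (fun t => F i t + \sum_(j <- s) F j t).
  by apply/funext => t; rewrite big_cons.
have [d e] := cdiffD _ _ _ (dF i (mem_head _ _)) ds.
by rewrite big_cons -es; split.
Qed.

Fixpoint Tl (j : nat) : seq (nat * nat) :=
  if j is j'.+1 then flatten [seq [:: (pq.1.+1, pq.2); (pq.1, pq.2.+1)] | pq <- Tl j']
  else [:: (0%N, 0%N)].

Lemma Tl_bound j pq : pq \in Tl j -> (pq.1 <= j)%N /\ (pq.2 <= j)%N.
Proof.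
elim: j pq => [|j IH] pq /=; first by rewrite inE => /eqP -> /=.
move=> /flatten_mapP [[p q] /IH /= [hp hq]].
by rewrite !inE => /orP [] /eqP -> /=; split; rewrite ?ltnS //; apply: leqW.
Qed.

Arguments Tl_bound {j pq}.

Lemma size_Tl j : size (Tl j) = (2 ^ j)%N.
Proof.
elim: j => [//|j IH] /=.
have H : forall s : seq (nat * nat),
  size (flatten [seq [:: (pq.1.+1, pq.2); (pq.1, pq.2.+1)] | pq <- s]) = (2 * size s)%N.
  by elim => [//|x s IHs] /=; rewrite IHs mulnS.
by rewrite H IH expnS.
Qed.

Variable m : nat.
Variables f g : 'I_m -> R -> C.

Definition Prod x := \sum_(k < m) f k x * g k x.
Definition Leib j x := \sum_(k < m) \sum_(pq <- Tl j) cderivn pq.1 (f k) x * cderivn pq.2 (g k) x.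

Lemma Leib0 x : Leib 0 x = Prod x.
Proof. by rewrite /Leib /Prod; apply: eq_bigr => k _; rewrite big_seq1. Qed.

Definition hypat j x := forall k p, (p <= j)%N ->
  cdiff (cderivn p (f k)) x /\ cdiff (cderivn p (g k)) x.

Lemma leib_deriv j x : hypat j x -> cdiff (Leib j) x /\ cderiv (Leib j) x = Leib j.+1 x.
Proof.
move=> H.
have inner : forall k, cdiff (fun t => \sum_(pq <- Tl j) cderivn pq.1 (f k) t * cderivn pq.2 (g k) t) x /\
  cderiv (fun t => \sum_(pq <- Tl j) cderivn pq.1 (f k) t * cderivn pq.2 (g k) t) x =
  \sum_(pq <- Tl j) (cderivn pq.1.+1 (f k) x * cderivn pq.2 (g k) x +
                     cderivn pq.1 (f k) x * cderivn pq.2.+1 (g k) x).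
  move=> k.
  have [d e] := cdiff_sum_in _ (Tl j) (fun pq t => cderivn pq.1 (f k) t * cderivn pq.2 (g k) t) x
    (fun pq hpq => (cdiffM _ _ _ (H k _ (Tl_bound hpq).1).1 (H k _ (Tl_bound hpq).2).2).1).
  split => //; rewrite e big_seq_cond [RHS]big_seq_cond; apply: eq_bigr => pq /andP[hpq _].
  by rewrite (cdiffM _ _ _ (H k _ (Tl_bound hpq).1).1 (H k _ (Tl_bound hpq).2).2).2.
have [d e] := cdiff_sum _ (index_enum 'I_m)
  (fun k t => \sum_(pq <- Tl j) cderivn pq.1 (f k) t * cderivn pq.2 (g k) t) x (fun k => (inner k).1).
split; first exact: d.
rewrite /Leib e; apply: eq_bigr => k _; rewrite (inner k).2 /=.
rewrite big_flatten /= big_map; apply: eq_bigr => pq _.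
by rewrite big_cons big_seq1.
Qed.

Lemma leib_step j (U : set R) x : open U -> U x ->
  (forall z, U z -> cderivn j Prod z = Leib j z) -> hypat j x ->
  cderivn j.+1 Prod x = Leib j.+1 x.
Proof.
move=> oU Ux eqU H.
have -> : cderivn j.+1 Prod x = cderiv (cderivn j Prod) x by [].
have -> : cderiv (cderivn j Prod) x = cderiv (Leib j) x.
  apply: cderiv_loc.
  have : nbhs x U by apply: open_nbhs_nbhs; split.
  by apply: filterS => z Uz; exact: eqU.
exact: (@leib_deriv j x H).2.
Qed.

Lemma leib_open j (U : set R) : open U ->
  (forall z, U z -> forall k p, (p.+1 <= j)%N ->
     cdiff (cderivn p (f k)) z /\ cdiff (cderivn p (g k)) z) ->
  forall z, U z -> cderivn j Prod z = Leib j z.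
Proof.
move=> oU; elim: j => [|j IH] H z Uz; first by rewrite Leib0.
apply: (@leib_step j U z oU Uz).
  by apply: IH => // w Uw k p hp; apply: H => //; exact: leqW.
by move=> k p hp; apply: H.
Qed.

Lemma normc_ge0 (z : C) : 0 <= ComplexField.Normc.normc z.
Proof. by case: z => p q; exact: sqrtr_ge0. Qed.

Lemma normc_sum (I : Type) (s : seq I) (F : I -> C) :
  ComplexField.Normc.normc (\sum_(i <- s) F i) <= \sum_(i <- s) ComplexField.Normc.normc (F i).
Proof.
elim: s => [|i s IH]; first by rewrite !big_nil ComplexField.Normc.normc0.
rewrite !big_cons; apply: le_trans (le_normcD _ _) _; exact: lerD.
Qed.

Lemma leib_bound j x (M Y : R) :
  (forall k p, (p <= j)%N -> ComplexField.Normc.normc (cderivn p (f k) x) <= M) ->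
  (forall k p, (p <= j)%N -> ComplexField.Normc.normc (cderivn p (g k) x) <= Y) ->
  ComplexField.Normc.normc (Leib j x) <= (m * 2 ^ j)%:R * (M * Y).
Proof.
move=> hM hY.
apply: le_trans (normc_sum _ _ _) _.
apply: (@le_trans _ _ (\sum_(k < m) ((2 ^ j)%:R * (M * Y)))).
  apply: ler_sum => k _.
  apply: le_trans (normc_sum _ _ _) _.
  apply: (@le_trans _ _ (\sum_(pq <- Tl j) (M * Y))).
    rewrite big_seq_cond [X in _ <= X]big_seq_cond; apply: ler_sum => pq /andP[hpq _].
    rewrite ComplexField.Normc.normcM; apply: ler_pM; rewrite ?normc_ge0 //.
      exact: hM (Tl_bound hpq).1.
    exact: hY (Tl_bound hpq).2.
  have -> : forall (s : seq (nat * nat)) (c : R), \sum_(pq <- s) c = c *+ size s.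
    by move=> s c; elim: s => [|? s IHs]; rewrite ?big_nil ?big_cons ?IHs ?mulrS.
  by rewrite size_Tl mulr_natl.
by rewrite sumr_const card_ord natrM -mulr_natl; rewrite le_eqVlt; apply/orP; left; apply/eqP; ring.
Qed.

End PartB.
Arguments Prod {R m}.
Arguments Leib {R m}.
Section PartC.
Context {R : realType}.
Local Notation C := (R[i]).
Local Notation mu := (@lebesgue_measure R).
Local Notation normc := (@ComplexField.Normc.normc R).
Variables a b : R.
Hypothesis hab : a < b.

Lemma aeS (P Q : R -> Prop) : (forall x, P x -> Q x) ->
  (\forall x \ae mu, P x) -> \forall x \ae mu, Q x.
Proof. move=> PQ; apply: filterS; first exact: (ae_filter_ringOfSetsType mu). exact: PQ. Qed.

Lemma aeS2 (P Q S : R -> Prop) : (forall x, P x -> Q x -> S x) ->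
  (\forall x \ae mu, P x) -> (\forall x \ae mu, Q x) -> \forall x \ae mu, S x.
Proof. move=> PQ; apply: filterS2; first exact: (ae_filter_ringOfSetsType mu). exact: PQ. Qed.

Lemma ae_forall (I : finType) (P : I -> R -> Prop) :
  (forall i, \forall x \ae mu, P i x) -> \forall x \ae mu, forall i, P i x.
Proof. apply: filter_forall; exact: (ae_filter_ringOfSetsType mu). Qed.

Lemma muT_gt0 : (0 < mu [set: R])%E.
Proof.
apply: (@lt_le_trans _ _ (mu `[a, b])).
  by rewrite lebesgue_measure_itv /= lte_fin hab lte_fin subr_gt0.
by apply: le_measure => //; rewrite inE.
Qed.

Lemma Linf_ge0 g : (0 <= Linf_norm a b g)%E.
Proof.
apply: ess_sup_gee; first exact: muT_gt0.
by apply: aeW => x; case: ifP => // _; rewrite lee_fin normc_ge0.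
Qed.

Lemma Linf_ae g : \forall x \ae mu, x \in `[a, b] -> ((normc (g x))%:E <= Linf_norm a b g)%E.
Proof.
have := ess_sup_ge mu (fun x => if x \in `[a, b] then (normc (g x))%:E else 0%E).
by apply: aeS => x + xin; rewrite xin.
Qed.

Lemma Linf_le g (B : R) : 0 <= B ->
  (\forall x \ae mu, x \in `[a, b] -> normc (g x) <= B) -> (Linf_norm a b g <= B%:E)%E.
Proof.
move=> B0 H; apply/ess_supP; move: H; apply: aeS => x H.
case: ifP => xin; first by move/H: xin; rewrite -lee_fin.
by move: B0; rewrite -lee_fin.
Qed.

Lemma Linf_ae_fine g : (Linf_norm a b g < +oo)%E ->
  \forall x \ae mu, x \in `[a, b] -> normc (g x) <= fine (Linf_norm a b g).
Proof.
move=> fin; move: (Linf_ae g); apply: aeS => x H xin; have := H xin.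
by case E: (Linf_norm a b g) fin => [r| |] //=; rewrite leeNy_eq.
Qed.

Lemma Re_le_normc (z : C) : `|complex.Re z| <= normc z.
Proof.
case: z => p q /=; rewrite -sqrtr_sqr; apply: ler_wsqrtr.
by rewrite lerDl sqr_ge0.
Qed.

Lemma Im_le_normc (z : C) : `|complex.Im z| <= normc z.
Proof.
case: z => p q /=; rewrite -sqrtr_sqr; apply: ler_wsqrtr.
by rewrite lerDr sqr_ge0.
Qed.

Lemma integrable_ae_bounded (h : R -> R) (M : R) :
  measurable_fun `[a, b] h ->
  (\forall x \ae mu, x \in `[a, b] -> `|h x| <= M) ->
  mu.-integrable `[a, b] (EFin \o h).
Proof.
move=> mh [N [mN N0 HN]].
have mab : measurable (`[a, b] : set R) by [].
apply/(@negligible_integrable _ _ _ mu _ _ (EFin \o h) mN mab _ N0).2.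
  by apply/measurable_EFinP.
apply: measurable_bounded_integrable.
- exact: measurableD.
- apply: (@le_lt_trans _ _ (mu `[a, b])).
    apply: le_measure.
    + by apply/mem_set; exact: measurableD.
    + by apply/mem_set.
    + exact: subDsetl.
  by rewrite lebesgue_measure_itv /= lte_fin hab ltry.
- by apply: measurable_funS mh.
- rewrite /bounded_near; near=> M0 => x /= [xin xN].
  have : `|h x| <= M.
    apply: contrapT => HM; apply: xN; apply: HN.
    by rewrite /setC /= => H; exact: HM (H xin).
  move=> hx; apply: (le_trans hx).
  near: M0; exact: nbhs_pinfty_ge (num_real M).
Unshelve. all: by end_near. Qed.

End PartC.
Section PartC2.
Context {R : realType}.
Local Notation C := (R[i]).
Local Notation mu := (@lebesgue_measure R).
Local Notation normc := (@ComplexField.Normc.normc R).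
Variables a b : R.
Hypothesis hab : a < b.

Definition Fint (g : R -> R) (y : R) := \int[mu]_(t in `[a, y]) g t.

Lemma int_cont (g : R -> R) x : mu.-integrable `[a, b] (EFin \o g) -> a < x < b ->
  {for x, continuous (Fint g)}.
Proof.
move=> ig xab; have := parameterized_integral_continuous (ltW hab) ig.
by move/(within_continuous_continuous hab); apply; rewrite in_itv.
Qed.

Lemma int_deriv_cont (g : R -> R) x : mu.-integrable `[a, b] (EFin \o g) -> a < x < b ->
  {for x, continuous g} -> derivable (Fint g) x 1.
Proof.
move=> ig /andP[ax xb] cg.
by have [] := continuous_FTC1_closed xb ig ax cg.
Qed.

Lemma int_deriv_ae (g : R -> R) : mu.-integrable `[a, b] (EFin \o g) ->
  \forall x \ae mu, a < x < b -> derivable (Fint g) x 1.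
Proof.
move=> ig.
have mab : measurable (`[a, b] : set R) by [].
have loc := integrable_locally mab ig.
move: (lebesgue_differentiation loc); apply: aeS => x lx /andP[ax xb].
have igr : mu.-integrable [set` Interval (BLeft a) (BRight b)] (EFin \o (g \_ `[a, b])).
  apply: eq_integrable ig => //= t tin.
  by rewrite /= patchE; rewrite inE in tin; rewrite mem_set.
have ax' : (BLeft a < BRight x)%E by rewrite /= lte_fin.
have [dF _] := FTC1_lebesgue_pt xb igr ax' lx.
apply: near_eq_derivable dF.
have : \forall y \near x, y \in `]a, b[ by apply: near_in_itvoo; rewrite in_itv /= ax xb.
apply: filterS => y; rewrite in_itv /= => /andP[ay yb].
rewrite /Fint; apply: eq_Rintegral => t; rewrite inE /= in_itv /= => /andP[a_t ty].
by rewrite patchE mem_set //= in_itv /= a_t (le_trans ty (ltW yb)).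
Qed.

Lemma cont_loc (F G : R -> R) x : (\near x, F x = G x) -> {for x, continuous F} ->
  {for x, continuous G}.
Proof.
move=> FG cF.
have Gx : F x = G x := nbhs_singleton FG.
have h : G @ x --> F x.
  by apply: cvg_trans cF; apply: near_eq_cvg; apply: filterS FG => y ->.
by move: h; rewrite Gx.
Qed.

Definition ccont (h : R -> C) x := {for x, continuous (fun t => complex.Re (h t))} /\
  {for x, continuous (fun t => complex.Im (h t))}.

Lemma cdiff_ccont h x : cdiff h x -> ccont h x.
Proof.
by move=> [d1 d2]; split; apply: differentiable_continuous; apply/derivable1_diffP.
Qed.

Definition cint_ok (g : R -> C) := mu.-integrable `[a, b] (EFin \o (fun t => complex.Re (g t))) /\
  mu.-integrable `[a, b] (EFin \o (fun t => complex.Im (g t))).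

Definition crel (h g : R -> C) := exists c : C, forall y, a < y < b -> h y = c + cintegral a y g.

Lemma crel_Re h g : crel h g -> exists c : R, forall y, a < y < b ->
  complex.Re (h y) = c + Fint (fun t => complex.Re (g t)) y.
Proof. by move=> [c hc]; exists (complex.Re c) => y /hc ->; rewrite ReD. Qed.

Lemma crel_Im h g : crel h g -> exists c : R, forall y, a < y < b ->
  complex.Im (h y) = c + Fint (fun t => complex.Im (g t)) y.
Proof. by move=> [c hc]; exists (complex.Im c) => y /hc ->; rewrite ImD. Qed.

Lemma near_ab x : a < x < b -> \forall y \near x, a < y < b.
Proof.
move=> xab; have : \forall y \near x, y \in `]a, b[ by apply: near_in_itvoo; rewrite in_itv.
by apply: filterS => y; rewrite in_itv.
Qed.

Lemma re_loc (F G : R -> R) (c : R) x : a < x < b -> (forall y, a < y < b -> F y = c + G y) ->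
  \forall y \near x, (fun t => c + G t) y = F y.
Proof.
move=> xab hF; near=> y; rewrite /= hF //.
near: y; exact: near_ab.
Unshelve. all: by end_near. Qed.

Lemma crel_cont h g x : crel h g -> cint_ok g -> a < x < b -> ccont h x.
Proof.
move=> hr [i1 i2] xab; split.
  have [c hc] := crel_Re _ _ hr; apply: cont_loc (re_loc _ _ _ _ xab hc) _.
  by apply: continuousD; [exact: cst_continuous | exact: int_cont].
have [c hc] := crel_Im _ _ hr; apply: cont_loc (re_loc _ _ _ _ xab hc) _.
by apply: continuousD; [exact: cst_continuous | exact: int_cont].
Qed.

Lemma crel_cdiff h g x : crel h g -> cint_ok g -> a < x < b -> ccont g x -> cdiff h x.
Proof.
move=> hr [i1 i2] xab [c1 c2]; split.
  have [c hc] := crel_Re _ _ hr; apply: near_eq_derivable (re_loc _ _ _ _ xab hc) _.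
  by apply: derivableD; [exact: derivable_cst | exact: int_deriv_cont].
have [c hc] := crel_Im _ _ hr; apply: near_eq_derivable (re_loc _ _ _ _ xab hc) _.
by apply: derivableD; [exact: derivable_cst | exact: int_deriv_cont].
Qed.

Lemma crel_cdiff_ae h g : crel h g -> cint_ok g ->
  \forall x \ae mu, a < x < b -> cdiff h x.
Proof.
move=> hr [i1 i2].
apply: (aeS2 _ _ _ _ (int_deriv_ae _ i1) (int_deriv_ae _ i2)) => x d1 d2 xab; split.
  have [c hc] := crel_Re _ _ hr; apply: near_eq_derivable (re_loc _ _ _ _ xab hc) _.
  by apply: derivableD; [exact: derivable_cst | exact: d1].
have [c hc] := crel_Im _ _ hr; apply: near_eq_derivable (re_loc _ _ _ _ xab hc) _.
by apply: derivableD; [exact: derivable_cst | exact: d2].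
Qed.

End PartC2.
Section PartC3.
Context {R : realType}.
Local Notation C := (R[i]).
Local Notation mu := (@lebesgue_measure R).
Local Notation normc := (@ComplexField.Normc.normc R).
Variables a b : R.
Hypothesis hab : a < b.

Definition Good (k : nat) (h : R -> C) :=
  (forall x, a < x < b -> forall p, (p.+2 <= k)%N -> cdiff (cderivn p h) x) /\
  (\forall x \ae mu, a < x < b -> forall p, (p < k)%N -> cdiff (cderivn p h) x).

Lemma ok_of_bounded (g : R -> C) : measurable_on a b g -> (Linf_norm a b g < +oo)%E ->
  cint_ok a b g.
Proof.
move=> [m1 m2] fin; split.
  apply: (integrable_ae_bounded _ _ hab _ (fine (Linf_norm a b g))) => //.
  move: (Linf_ae_fine _ _ _ fin); apply: aeS => x H xin.
  exact: le_trans (Re_le_normc _) (H xin).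
apply: (integrable_ae_bounded _ _ hab _ (fine (Linf_norm a b g))) => //.
move: (Linf_ae_fine _ _ _ fin); apply: aeS => x H xin.
exact: le_trans (Im_le_normc _) (H xin).
Qed.

Lemma W_good (k : nat) (f : R -> C) : isW a b k f -> Good k f.
Proof.
move=> [W1 W2].
have rel : forall j, (j < k)%N -> crel a b (cderivn j f) (cderivn j.+1 f).
  by move=> j /W2.
have ok : forall j, (j <= k)%N -> cint_ok a b (cderivn j f).
  by move=> j /W1 [ma fa]; exact: ok_of_bounded.
have ev : forall i p, (p.+2 + i)%N = k -> forall x, a < x < b -> cdiff (cderivn p f) x.
  elim => [|i IH] p hp x xab.
    rewrite addn0 in hp.
    have h1 : (p < k)%N by rewrite -hp.
    have h2 : (p.+1 <= k)%N by rewrite -hp.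
    have h3 : (p.+1 < k)%N by rewrite -hp.
    have h4 : (p.+2 <= k)%N by rewrite -hp.
    apply: (crel_cdiff _ _ _ _ _ (rel p h1) (ok p.+1 h2) xab).
    exact: (crel_cont _ _ hab _ _ _ (rel p.+1 h3) (ok p.+2 h4) xab).
  have h1 : (p < k)%N by lia.
  have h2 : (p.+1 <= k)%N by [].
  apply: (crel_cdiff _ _ _ _ _ (rel p h1) (ok p.+1 h2) xab).
  apply: cdiff_ccont; apply: (IH p.+1) => //; by rewrite -hp addnS.
split.
  move=> x xab p hp; apply: (ev (k - p.+2)%N) => //; exact: subnKC.
case: k rel ok ev {W1 W2} => [|k] rel ok ev.
  by apply: aeW.
move: (crel_cdiff_ae _ _ _ _ (rel k (ltnSn k)) (ok k.+1 (leqnn _))).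
apply: aeS => x H xab p hp.
have [->|ne] := eqVneq p k; first exact: H.
apply: (ev (k.+1 - p.+2)%N) => //; apply: subnKC.
by rewrite ltnS ltn_neqAle ne -ltnS hp.
Qed.

Lemma Good_sub (k : nat) (f g : R -> C) : Good k f -> Good k g -> Good k (fun x => f x - g x).
Proof.
move=> [f1 f2] [g1 g2].
have E : forall p, (p < k)%N -> forall x, a < x < b ->
    cderivn p (fun x => f x - g x) x = cderivn p f x - cderivn p g x.
  elim => [//|p IH] hp x xab.
  have -> : cderivn p.+1 (fun x => f x - g x) x = cderiv (cderivn p (fun x => f x - g x)) x by [].
  rewrite (@cderiv_loc _ _ (fun t => cderivn p f t - cderivn p g t)).
    exact: (cdiffB _ _ _ (f1 x xab p hp) (g1 x xab p hp)).2.
  near=> y; apply: IH; first exact: ltnW.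
  near: y; exact: near_ab.
split.
  move=> x xab p hp.
  apply: (@cdiff_loc _ (fun t => cderivn p f t - cderivn p g t)).
    near=> y; rewrite E //; first exact: ltnW.
    near: y; exact: near_ab.
  exact: (cdiffB _ _ _ (f1 x xab p hp) (g1 x xab p hp)).1.
apply: (aeS2 _ _ _ _ f2 g2) => x H1 H2 xab p hp.
apply: (@cdiff_loc _ (fun t => cderivn p f t - cderivn p g t)).
  near=> y; rewrite E //.
  near: y; exact: near_ab.
exact: (cdiffB _ _ _ (H1 xab p hp) (H2 xab p hp)).1.
Unshelve. all: by end_near. Qed.

End PartC3.
Section PartD.
Context {R : realType}.
Local Notation C := (R[i]).
Local Notation mu := (@lebesgue_measure R).
Local Notation normc := (@ComplexField.Normc.normc R).
Variables a b : R.
Hypothesis hab : a < b.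

Lemma ae_notab : \forall x \ae mu, x != a /\ x != b.
Proof.
exists ([set a] `|` [set b]); split.
- exact: measurableU.
- by rewrite measureU0 //; [exact: lebesgue_measure_set1 | exact: lebesgue_measure_set1].
- move=> x /= H; apply: contrapT => H'; apply: H.
  by split; apply/eqP => xe; apply: H'; [left|right].
Qed.

Lemma aeAnd (P Q : R -> Prop) : (\forall x \ae mu, P x) -> (\forall x \ae mu, Q x) ->
  \forall x \ae mu, P x /\ Q x.
Proof. move=> hP hQ; exact: (aeS2 _ _ _ (fun x h1 h2 => conj h1 h2) hP hQ). Qed.

Variables (m N : nat) (D Yv : 'I_m -> R -> C) (M Y : R).
Hypothesis M0 : 0 <= M.
Hypothesis Y0 : 0 <= Y.
Hypothesis GD : forall k, Good a b N (D k).
Hypothesis GY : forall k, Good a b N.+1 (Yv k).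
Hypothesis BD : forall k (p : 'I_N.+1), \forall x \ae mu, x \in `[a, b] -> normc (cderivn p (D k) x) <= M.
Hypothesis BY : forall k (p : 'I_N.+1), \forall x \ae mu, x \in `[a, b] -> normc (cderivn p (Yv k) x) <= Y.

Lemma row_bound (j : nat) : (j <= N)%N ->
  (Linf_norm a b (cderivn j (Prod D Yv)) <= ((m * 2 ^ N)%:R * (M * Y))%:E)%E.
Proof.
move=> jN.
apply: Linf_le; first by rewrite mulr_ge0 // mulr_ge0.
have A2 := ae_forall _ _ (fun k => (GD k).2).
have A3 := ae_forall _ _ (fun k => (GY k).2).
have A4 := ae_forall _ _ (fun k => ae_forall _ _ (BD k)).
have A5 := ae_forall _ _ (fun k => ae_forall _ _ (BY k)).
move: (aeAnd _ _ ae_notab (aeAnd _ _ A2 (aeAnd _ _ A3 (aeAnd _ _ A4 A5)))).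
apply: aeS => x [[xa xb] [H2 [H3 [H4 H5]]]] xin.
have xab : a < x < b.
  move: xin; rewrite in_itv /= => /andP[ax xb0].
  by rewrite !lt_neqAle ax xb0 eq_sym xa xb.
have E : cderivn j (Prod D Yv) x = Leib D Yv j x.
  case: j jN => [|j] jN; first by rewrite Leib0.
  apply: (@leib_step _ _ _ _ j (`]a, b[%classic)).
  - exact: itv_open.
  - by rewrite /= in_itv.
  - apply: leib_open; first exact: itv_open.
    move=> z; rewrite /= in_itv => zab k p hp; split.
      apply: (GD k).1 => //; lia.
    apply: (GY k).1 => //; lia.
  - move=> k p hp; split.
      by apply: (H2 k xab); lia.
    by apply: (H3 k xab); lia.
have hM : forall k p, (p <= j)%N -> normc (cderivn p (D k) x) <= M.
  move=> k p hp; have pN : (p < N.+1)%N by lia.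
  exact: (H4 k (Ordinal pN) xin).
have hY : forall k p, (p <= j)%N -> normc (cderivn p (Yv k) x) <= Y.
  move=> k p hp; have pN : (p < N.+1)%N by lia.
  exact: (H5 k (Ordinal pN) xin).
rewrite E; apply: le_trans (leib_bound _ _ _ _ _ _ _ hM hY) _.
apply: ler_wpM2r; first by rewrite mulr_ge0.
by rewrite ler_nat leq_mul2l leq_exp2l // jN orbT.
Qed.

End PartD.
Section PartE.
Context {R : realType}.
Local Notation C := (R[i]).
Local Notation mu := (@lebesgue_measure R).
Local Notation normc := (@ComplexField.Normc.normc R).
Variables a b : R.
Hypothesis hab : a < b.

Lemma le_sum_ord (n : nat) (F : 'I_n -> \bar R) (i : 'I_n) :
  (forall j, (0 <= F j)%E) -> (F i <= \sum_(j < n) F j)%E.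
Proof.
move=> F0; rewrite (bigD1 i) //=; apply: leeDl.
by apply: sume_ge0 => j _; exact: F0.
Qed.

Lemma Wnorm_ge0 k f : (0 <= Wnorm a b k f)%E.
Proof. by apply: sume_ge0 => j _; exact: Linf_ge0. Qed.

Lemma Wvec_ge0 k m (y : R -> 'cV[C]_m) : (0 <= Wvec_norm a b k y)%E.
Proof. by apply: sume_ge0 => j _; exact: Wnorm_ge0. Qed.

Lemma Wmat_ge0 k m (A : R -> 'M[C]_m) : (0 <= Wmat_norm a b k A)%E.
Proof. by apply: sume_ge0 => i _; apply: sume_ge0 => j _; exact: Wnorm_ge0. Qed.

Lemma Linf_le_Wnorm k f (p : 'I_k.+1) : (Linf_norm a b (cderivn p f) <= Wnorm a b k f)%E.
Proof. by apply: (le_sum_ord _ (fun j : 'I_k.+1 => Linf_norm a b (cderivn j f))) => j; exact: Linf_ge0. Qed.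

Lemma Wnorm_le_Wvec k m (y : R -> 'cV[C]_m) i :
  (Wnorm a b k (fun x => y x i ord0) <= Wvec_norm a b k y)%E.
Proof. by apply: (le_sum_ord _ (fun j : 'I_m => Wnorm a b k (fun x => y x j ord0))) => j; exact: Wnorm_ge0. Qed.

Lemma Wnorm_le_Wmat k m (A : R -> 'M[C]_m) i j :
  (Wnorm a b k (fun x => A x i j) <= Wmat_norm a b k A)%E.
Proof.
apply: le_trans (le_sum_ord _ (fun i : 'I_m => \sum_(j < m) Wnorm a b k (fun x => A x i j)) i _).
  apply: (le_sum_ord _ (fun j : 'I_m => Wnorm a b k (fun x => A x i j))) => j'; exact: Wnorm_ge0.
by move=> i'; apply: sume_ge0 => j' _; exact: Wnorm_ge0.
Qed.

Lemma ME (m : nat) (Ae A0 : R -> 'M[C]_m) (y : R -> 'cV[C]_m) (N : nat) (Y : R) :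
  isWmat a b N Ae -> isWmat a b N A0 -> isWvec a b N.+1 y -> (Wvec_norm a b N.+1 y <= Y%:E)%E ->
  (Wmat_norm a b N (fun x => (Ae x - A0 x)%R) < +oo)%E ->
  (Wvec_norm a b N (fun x => (Lop Ae y x - Lop A0 y x)%R) <=
     ((m * N.+1 * (m * 2 ^ N))%:R * (fine (Wmat_norm a b N (fun x => (Ae x - A0 x)%R)) * Y))%:E)%E.
Proof.
move=> WA WB Wy yY Wfin.
set W := Wmat_norm a b N (fun x => (Ae x - A0 x)%R).
have W0 : (0 <= W)%E by exact: Wmat_ge0.
have WE : W = (fine W)%:E by rewrite fineK // ge0_fin_numE.
have M0 : 0 <= fine W by rewrite -lee_fin -WE.
have Y0 : 0 <= Y by rewrite -lee_fin; exact: le_trans (Wvec_ge0 _ _ _) yY.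
set B := (m * 2 ^ N)%:R * (fine W * Y).
have rowb : forall i : 'I_m, (Wnorm a b N (fun x => (Lop Ae y x - Lop A0 y x)%R i ord0) <= (B *+ N.+1)%:E)%E.
  move=> i.
  pose D := fun (k : 'I_m) (x : R) => (Ae x - A0 x) i k.
  pose Yv := fun (k : 'I_m) (x : R) => y x k ord0.
  have -> : (fun x => (Lop Ae y x - Lop A0 y x)%R i ord0) = Prod D Yv.
    apply/funext => x; rewrite /Lop /Prod /D /Yv !mxE.
    by rewrite opprD addrACA subrr add0r -sumrB; apply: eq_bigr => k _; rewrite !mxE mulrBl.
  have GD : forall k, Good a b N (D k).
    move=> k; have -> : D k = (fun x => Ae x i k - A0 x i k).
      by apply/funext => x; rewrite /D !mxE.
    exact: Good_sub (W_good _ _ hab _ _ (WA i k)) (W_good _ _ hab _ _ (WB i k)).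
  have GY : forall k, Good a b N.+1 (Yv k) by move=> k; exact: W_good _ _ hab _ _ (Wy k).
  have BD : forall k (p : 'I_N.+1), \forall x \ae mu, x \in `[a, b] ->
      normc (cderivn p (D k) x) <= fine W.
    move=> k p; move: (Linf_ae a b (cderivn p (D k))); apply: aeS => x H xin.
    have := le_trans (H xin) (le_trans (Linf_le_Wnorm _ _ p) (Wnorm_le_Wmat _ _ _ i k)).
    by rewrite -/W WE lee_fin.
  have BY : forall k (p : 'I_N.+1), \forall x \ae mu, x \in `[a, b] ->
      normc (cderivn p (Yv k) x) <= Y.
    move=> k p; move: (Linf_ae a b (cderivn p (Yv k))); apply: aeS => x H xin.
    have pN : (p < N.+2)%N by rewrite ltnS ltnW.
    have := le_trans (H xin) (le_trans (Linf_le_Wnorm _ _ (Ordinal pN))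
      (le_trans (Wnorm_le_Wvec _ _ y k) yY)).
    by rewrite lee_fin.
  rewrite /Wnorm; apply: (@le_trans _ _ (\sum_(j < N.+1) B%:E)).
    apply: lee_sum => j _.
    exact: (row_bound _ _ hab _ _ D Yv (fine W) Y M0 Y0 GD GY BD BY j (ltn_ord j)).
  by rewrite sumEFin sumr_const card_ord.
rewrite /Wvec_norm; apply: (@le_trans _ _ (\sum_(i < m) (B *+ N.+1)%:E)).
  by apply: lee_sum => i _; exact: rowb.
rewrite sumEFin sumr_const card_ord lee_fin /B.
rewrite le_eqVlt; apply/orP; left; apply/eqP.
rewrite -[_ *+ m]mulr_natr -[_ *+ N.+1]mulr_natr !natrM; ring.
Qed.

End PartE.
Section PartF.
Context {R : realType}.
Local Notation C := (R[i]).
Local Notation mu := (@lebesgue_measure R).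
Local Notation normc := (@ComplexField.Normc.normc R).
Variables a b : R.
Hypothesis hab : a < b.

Lemma cderivn_cst (c : C) p : cderivn p (fun=> c) = (fun=> if p is 0 then c else 0).
Proof.
elim: p => [//|p IH].
change (cderiv (cderivn p (fun=> c)) = (fun=> 0)); rewrite IH.
by apply/funext => x; exact: cderiv_cst.
Qed.

Lemma Linf_cst (c : C) : (Linf_norm a b (fun=> c) <= (normc c)%:E)%E.
Proof. by apply: Linf_le; [exact: normc_ge0 | apply: aeW]. Qed.

Lemma Linf_cst0 : Linf_norm a b (fun=> (0 : C)) = 0%E.
Proof.
apply: le_anti; rewrite Linf_ge0 // andbT.
by apply: le_trans (Linf_cst 0) _; rewrite ComplexField.Normc.normc0.
Qed.

Lemma cintegral0 x : cintegral a x (fun=> (0 : C)) = 0.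
Proof.
rewrite /cintegral /=.
by rewrite !Rintegral_cst // !mul0r.
Qed.

Lemma const_isW (c : C) k : isW a b k (fun=> c).
Proof.
split.
  move=> j _; rewrite cderivn_cst; split.
    by split; exact: measurable_cst.
  by apply: le_lt_trans (Linf_cst _) _; exact: ltry.
move=> j _; exists (if j is 0 then c else 0) => x _.
by rewrite !cderivn_cst cintegral0 addr0.
Qed.

Lemma Wnorm_cst (c : C) k : (Wnorm a b k (fun=> c) <= (normc c)%:E)%E.
Proof.
rewrite /Wnorm big_ord_recl /=.
rewrite big1 ?adde0; first exact: Linf_cst.

move=> i _; rewrite add0n; change (Linf_norm a b (cderivn i.+1 (fun=> c)) = 0%E).
by rewrite cderivn_cst /= Linf_cst0.
Qed.

Variable m : nat.

Definition ej (j : 'I_m) : R -> 'cV[C]_m := fun x => \col_(i < m) ((i == j)%:R : C).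

Lemma ej_comp j i : (fun x => ej j x i ord0) = fun=> ((i == j)%:R : C).
Proof. by apply/funext => x; rewrite /ej mxE. Qed.

Lemma ej_isWvec k j : isWvec a b k (ej j).
Proof. by move=> i; rewrite ej_comp; exact: const_isW. Qed.

Lemma ej_norm k j : (Wvec_norm a b k (ej j) <= 1)%E.
Proof.
rewrite /Wvec_norm.
apply: (@le_trans _ _ (\sum_(i < m) (normc ((i == j)%:R : C))%:E)).
  by apply: lee_sum => i _; rewrite ej_comp; exact: Wnorm_cst.
rewrite sumEFin lee_fin (bigD1 j) //= eqxx ComplexField.Normc.normc1 big1 ?addr0 //.
by move=> i /negbTE ->; rewrite ComplexField.Normc.normc0.
Qed.

Definition y0 : R -> 'cV[C]_m := fun x => 0.

Lemma y0_isWvec k : isWvec a b k y0.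
Proof.
move=> i; have -> : (fun x => y0 x i ord0) = fun=> (0 : C) by apply/funext => x; rewrite mxE.
exact: const_isW.
Qed.

Lemma y0_norm k : (Wvec_norm a b k y0 <= 1)%E.
Proof.
rewrite /Wvec_norm; apply: (@le_trans _ _ (\sum_(i < m) 0%E)).
  apply: lee_sum => i _.
  have -> : (fun x => y0 x i ord0) = fun=> (0 : C) by apply/funext => x; rewrite mxE.
  by apply: le_trans (Wnorm_cst _ _) _; rewrite ComplexField.Normc.normc0.
by rewrite big1 // lee01.
Qed.

Lemma Lop_ej (Ae A0 : R -> 'M[C]_m) j :
  (fun x => (Lop Ae (ej j) x - Lop A0 (ej j) x)%R) = (fun x => (Ae x - A0 x) *m (ej j x)).
Proof.
apply/funext => x; rewrite /Lop.
by rewrite opprD addrACA subrr add0r mulmxBl.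
Qed.

Lemma Wmat_eq (Ae A0 : R -> 'M[C]_m) N :
  Wmat_norm a b N (fun x => (Ae x - A0 x)%R) =
  (\sum_(j < m) Wvec_norm a b N (fun x => (Lop Ae (ej j) x - Lop A0 (ej j) x)%R))%E.
Proof.
rewrite /Wmat_norm /Wvec_norm exchange_big; apply: eq_bigr => j _; apply: eq_bigr => i _.
congr Wnorm; apply/funext => x /=.
rewrite /Lop opprD addrACA subrr add0r -mulmxBl [RHS]mxE.
rewrite (bigD1 j) //= big1 ?addr0; first by rewrite !mxE eqxx mulr1.
by move=> k /negbTE kj; rewrite !mxE kj mulr0.
Qed.

Lemma Wvec_fin k (y : R -> 'cV[C]_m) : isWvec a b k y -> Wvec_norm a b k y \is a fin_num.
Proof.
move=> Wy; apply/sum_fin_numP => i _ _.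
apply/sum_fin_numP => j _ _.
rewrite ge0_fin_numE ?Linf_ge0 //.
by have [+ _] := Wy i; move/(_ j (leq_ord j)) => [].
Qed.

End PartF.

Lemma cvge_sum0 {R : realType} (T : Type) (F : set_system T) (FF : Filter F) (I : Type) (s : seq I)
   (G : I -> T -> \bar R) :
  (forall i, G i t @[t --> F] --> 0%E) -> (\sum_(i <- s) G i t)%E @[t --> F] --> 0%E.
Proof.
move=> HG; elim: s => [|i s IH].
  have -> : (fun t => (\sum_(i <- [::]) G i t)%E) = fun=> 0%E by apply/funext => t; rewrite big_nil.
  exact: cvg_cst.
have -> : (fun t => (\sum_(j <- i :: s) G j t)%E) = fun t => (G i t + \sum_(j <- s) G j t)%E.
  by apply/funext => t; rewrite big_cons.
rewrite -[X in _ --> X]adde0; exact: cvgeD.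
Qed.
Theorem lemma5 (R : realType) (a b : R) (m n : nat) (eps0 : R)
  (A : R -> R -> 'M[R[i]]_m) :
  a < b -> (0 < n)%N -> 0 < eps0 ->
  (forall e, 0 <= e < eps0 -> isWmat a b n.-1 (A e)) ->
  let L := fun e => Lop (A e) in
  let I := (Wmat_norm a b n.-1 (fun x => A e x - A 0 x)) @[e --> 0^'+] --> 0%E in
  let a1 := (op_norm_diff a b n (L e) (L 0)) @[e --> 0^'+] --> 0%E in
  let a2 := forall y : R -> 'cV[R[i]]_m, isWvec a b n y ->
     (Wvec_norm a b n.-1 (fun x => L e y x - L 0 y x)) @[e --> 0^'+] --> 0%E in
  (I <-> a1) /\ (a1 <-> a2).
Proof.
move=> hab n0 e0 HA.
have [N nE] : exists N, n = N.+1 by exists n.-1; rewrite prednK.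
subst n; rewrite /= in HA.
cbv beta zeta.
rewrite !succnK.
set Wf := fun e => Wmat_norm a b N (fun x => (A e x - A 0 x)%R).
set op := fun e => op_norm_diff a b N.+1 (Lop (A e)) (Lop (A 0)).
have HA0 : isWmat a b N (A 0) by apply: HA; rewrite lexx e0.
have near_e : \forall e \near 0^'+, 0 < e < eps0.
  near=> e; apply/andP; split.
    near: e; exact: nbhs_right_gt.
  near: e; exact: nbhs_right_lt.
set c := ((m * N.+1 * (m * 2 ^ N))%:R : R).
have Ia : (Wf e @[e --> 0^'+] --> 0%E) -> \forall e \near 0^'+, forall (y : R -> 'cV[R[i]]_m) Y,
    isWvec a b N.+1 y -> (Wvec_norm a b N.+1 y <= Y%:E)%E ->
    (Wvec_norm a b N (fun x => (Lop (A e) y x - Lop (A 0) y x)%R)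
       <= (c * Y)%:E * Wf e)%E.
  move=> HI.
  have [Wfin _] := (fine_cvgP (fun e => Wf e) 0%R).1 HI.
  near=> e => y Y Wy yY.
  have He : isWmat a b N (A e).
    apply: HA; have /andP[e_gt0 e_lt] : 0 < e < eps0 by near: e.
    by rewrite (ltW e_gt0) e_lt.
  have Wf_fin : Wf e \is a fin_num by near: e.
  have Wlt : (Wf e < +oo)%E by rewrite ltey_eq Wf_fin.
  apply: le_trans (ME _ _ hab _ _ _ _ _ _ He HA0 Wy yY Wlt) _.
  change ((c * (fine (Wf e) * Y))%:E <= (c * Y)%:E * Wf e)%E.
  have WE := fineK Wf_fin.
  rewrite -[X in (_ <= _ * X)%E]WE -EFinM lee_fin.
  by rewrite mulrA mulrAC.
have I_a1 : (Wf e @[e --> 0^'+] --> 0%E) -> (op e @[e --> 0^'+] --> 0%E).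
  move=> HI.
  apply: (@squeeze_cvge _ _ _ _ (fun=> 0%E) _ (fun e => ((c * 1)%:E * Wf e)%E)).
  - have HIa := Ia HI.
    near=> e; have H1 : forall (y : R -> 'cV[R[i]]_m) Y,
      isWvec a b N.+1 y -> (Wvec_norm a b N.+1 y <= Y%:E)%E ->
      (Wvec_norm a b N (fun x => (Lop (A e) y x - Lop (A 0) y x)%R) <= (c * Y)%:E * Wf e)%E by near: e.
    apply/andP; split.
      apply: le_trans (Wvec_ge0 _ _ hab N m (fun x => (Lop (A e) (y0 _) x - Lop (A 0) (y0 _) x)%R)) _.
      apply: ereal_sup_ubound; exists (y0 _) => //; split; [exact: y0_isWvec | exact: y0_norm].
    apply: ge_ereal_sup => _ [y [Wy y1] <-].
    have H := H1 y 1 Wy y1; exact: H.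
  - exact: cvg_cst.
  - rewrite -(mule0 (c * 1)%:E); exact: cvgeZl.
have a1_I : (op e @[e --> 0^'+] --> 0%E) -> (Wf e @[e --> 0^'+] --> 0%E).
  move=> Ha1.
  apply: (@squeeze_cvge _ _ _ _ (fun=> 0%E) _ (fun e => (\sum_(j < m) op e)%E)).
  - near=> e; apply/andP; split; first exact: Wmat_ge0.
    rewrite /Wf /= Wmat_eq; apply: lee_sum => j _.
    apply: ereal_sup_ubound; exists (ej _ j) => //; split; [exact: ej_isWvec | exact: ej_norm].
  - exact: cvg_cst.
  - by apply: cvge_sum0 => j; exact: Ha1.
have I_a2 : (Wf e @[e --> 0^'+] --> 0%E) -> forall y : R -> 'cV[R[i]]_m, isWvec a b N.+1 y ->
    (Wvec_norm a b N (fun x => (Lop (A e) y x - Lop (A 0) y x)%R)) @[e --> 0^'+] --> 0%E.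
  move=> HI y Wy.
  have Yfin := Wvec_fin _ _ hab _ _ _ Wy.
  set Y := fine (Wvec_norm a b N.+1 y).
  have yY : (Wvec_norm a b N.+1 y <= Y%:E)%E by rewrite /Y fineK.
  apply: (@squeeze_cvge _ _ _ _ (fun=> 0%E) _ (fun e => ((c * Y)%:E * Wf e)%E)).
  - have HIa := Ia HI.
    near=> e; have H1 : forall (y : R -> 'cV[R[i]]_m) Y,
      isWvec a b N.+1 y -> (Wvec_norm a b N.+1 y <= Y%:E)%E ->
      (Wvec_norm a b N (fun x => (Lop (A e) y x - Lop (A 0) y x)%R) <= (c * Y)%:E * Wf e)%E by near: e.
    apply/andP; split; first exact: Wvec_ge0.
    exact: H1 y Y Wy yY.
  - exact: cvg_cst.
  - rewrite -(mule0 (c * Y)%:E); exact: cvgeZl.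
have a2_I : (forall y : R -> 'cV[R[i]]_m, isWvec a b N.+1 y ->
    (Wvec_norm a b N (fun x => (Lop (A e) y x - Lop (A 0) y x)%R)) @[e --> 0^'+] --> 0%E) ->
    (Wf e @[e --> 0^'+] --> 0%E).
  move=> Ha2.
  have E : forall e, Wf e = (\sum_(j < m) Wvec_norm a b N
      (fun x => (Lop (A e) (ej _ j) x - Lop (A 0) (ej _ j) x)%R))%E.
    by move=> e; exact: Wmat_eq.
  rewrite (eq_cvg _ _ E).
  by apply: cvge_sum0 => j; apply: Ha2; exact: ej_isWvec.
split; split.
- exact: I_a1.
- exact: a1_I.
- by move=> H1; apply: I_a2; exact: a1_I.
- by move=> H2; apply: I_a1; exact: a2_I.
Unshelve. all: by end_near. Qed.
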